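(* Let $u\le v$ in $S_n$, let $I$ be a strong hypercube decomposition of $[u,v]$ with hypercube maps $\theta_x$, and let $\prec$ be a reflection order satisfying (E1) relative to $I$. Then every increasing path from $u$ to $v$ in the Bruhat graph ends with a sequence of the form $$\cdots\to x\to\theta_x(\{y_1\})\to\theta_x(\{y_1,y_2\})\to\cdots\to\theta_x(\{y_1,\dots,y_k\})$$ for some $x\in I$ and some $\{y_1,\dots,y_k\}\in\mathcal{A}_x$.
   Context: $S_n$ is the symmetric group with simple reflections $s_i=(i\ i{+}1)$, length $\ell$, and $T$ the set of transpositions. The Bruhat graph $\Gamma$ has vertex set $S_n$ and edges $w\xrightarrow{t}tw$ labelled $t$ whenever $t\in T$, $\ell(w)<\ell(tw)$; Bruhat order is reachability; $\Gamma(u,v)$ is the induced subgraph on $[u,v]$. A path is increasing if its edge labels are strictly increasing under $\prec$. A diamond is a subgraph of $\Gamma$ with four distinct vertices $x_1,\dots,x_4$ and edges $x_1\to x_2\to x_4$, $x_1\to x_3\to x_4$; $X\subset[u,v]$ is diamond-closed in $[u,v]$ if it contains the fourth vertex of any diamond in $[u,v]$ of which it contains three vertices. A reflection order is a total order $\prec$ on $T$ with, for all $a<b<c$, either $(a\,b)\prec(a\,c)\prec(b\,c)$ or $(b\,c)\prec(a\,c)\prec(a\,b)$. For an order ideal $I\subset[u,v]$ and $x\in I$, $\mathcal{Y}_x=\{y\in[u,v]\setminus I: x\to y\}$ and $\mathcal{A}_x$ is the set of Bruhat antichains contained in $\mathcal{Y}_x$, with $Y_1\to Y_2$ iff $Y_1\subset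 Y_2$, $|Y_2\setminus Y_1|=1$. A strong hypercube cluster at $x$ is a map $\theta_x:\mathcal{A}_x\to[u,v]$ with (HC1) $\theta_x(\varnothing)=x$; (HC2) $\theta_x(\{y\})=y$; (HC3) $Y_1\to Y_2$ implies $\theta_x(Y_1)\to\theta_x(Y_2)$ in $\Gamma$; (HC4) if $|Y|=|Y'|=|Y\cap Y'|+1$ and $\theta_x(Y\cap Y'),\theta_x(Y),\theta_x(Y'),w$ form a diamond in $\Gamma(u,v)$ with top $w$, then $Y\cup Y'$ is an antichain and $\theta_x(Y\cup Y')=w$. A strong hypercube decomposition of $[u,v]$ is an order ideal $I=[u,z]$ ($z\in[u,v]$) that is diamond-closed in $[u,v]$ and such that every $x\in I$ has a strong hypercube cluster relative to $I$. Condition (E1) relative to $I$: for each $x\in I$, if $x\xrightarrow{t_1}y_1$ and $x\xrightarrow{t_2}y_2$ with $y_1\in I$ and $y_2\in[u,v]\setminus I$, then $t_1\prec t_2$. *)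

(* Defs.v *)
(* S_n = {perm 'I_n}; a transposition (a b) with a < b is
   represented by the pair (a, b) : 'I_n * 'I_n. *)
From HB Require Import structures.
From mathcomp Require Import all_boot all_order all_fingroup.
Set Implicit Arguments. Unset Strict Implicit. Unset Printing Implicit Defensive.

Section Bruhat.
Variable n : nat.
Local Notation perm_n := {perm 'I_n}.
Local Notation refl := ('I_n * 'I_n)%type.

Definition inv_len (w : perm_n) : nat :=
  #|[set p : refl | (p.1 < p.2) && (w p.2 < w p.1)]|.

Definition is_refl (t : refl) : bool := t.1 < t.2.

(* tmul t w = t w  (left multiplication: (t w)(i) = t (w i));
   in MathComp (w * s) i = s (w i). *)
Definition tmul (t : refl) (w : perm_n) : perm_n := (w * tperm t.1 t.2)%g.

Definition bedge (w : perm_n) (t : refl) (x : perm_n) : bool :=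
  [&& is_refl t, x == tmul t w & inv_len w < inv_len x].

Definition bedge0 : rel perm_n := fun w x => [exists t, bedge w t x].

Definition bruhat_le (u v : perm_n) : bool := connect bedge0 u v.

Definition binterval (u v : perm_n) : {set perm_n} :=
  [set w | bruhat_le u w && bruhat_le w v].

Definition diamond (x1 x2 x3 x4 : perm_n) : bool :=
  [&& uniq [:: x1; x2; x3; x4], bedge0 x1 x2, bedge0 x2 x4,
      bedge0 x1 x3 & bedge0 x3 x4].

Definition diamond_in (u v x1 x2 x3 x4 : perm_n) : bool :=
  diamond x1 x2 x3 x4 && all (fun x => x \in binterval u v) [:: x1; x2; x3; x4].

Definition diamond_closed (u v : perm_n) (X : {set perm_n}) : Prop :=
  forall x1 x2 x3 x4, diamond_in u v x1 x2 x3 x4 ->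
    3 <= #|[set x in [:: x1; x2; x3; x4] | x \in X]| ->
    [set x1; x2; x3; x4] \subset X.

Definition Ycal (u v : perm_n) (I : {set perm_n}) (x : perm_n) : {set perm_n} :=
  [set y in binterval u v :\: I | bedge0 x y].

Definition bantichain (Y : {set perm_n}) : bool :=
  [forall y in Y, forall y' in Y, (y != y') ==> ~~ bruhat_le y y'].

Definition in_Acal (u v : perm_n) (I : {set perm_n}) (x : perm_n)
  (Y : {set perm_n}) : bool := (Y \subset Ycal u v I x) && bantichain Y.

Definition cover_step (Y1 Y2 : {set perm_n}) : bool :=
  (Y1 \subset Y2) && (#|Y2 :\: Y1| == 1).

(* strong hypercube cluster at x: theta : A_x -> [u,v]
   (theta is a total function; only its values on A_x matter) *)
Definition strong_cluster (u v : perm_n) (I : {set perm_n}) (x : perm_n)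
  (theta : {set perm_n} -> perm_n) : Prop :=
  [/\ forall Y, in_Acal u v I x Y -> theta Y \in binterval u v,
      theta set0 = x,
      forall y, y \in Ycal u v I x -> theta [set y] = y,
      forall Y1 Y2, in_Acal u v I x Y1 -> in_Acal u v I x Y2 ->
        cover_step Y1 Y2 -> bedge0 (theta Y1) (theta Y2)
    & forall Y Y' w, in_Acal u v I x Y -> in_Acal u v I x Y' ->
        #|Y| = #|Y'| -> #|Y| = #|Y :&: Y'|.+1 ->
        diamond_in u v (theta (Y :&: Y')) (theta Y) (theta Y') w ->
        bantichain (Y :|: Y') /\ theta (Y :|: Y') = w].

(* I = [u,z] (z in [u,v]) is a strong hypercube decomposition of [u,v]
   with hypercube maps theta x *)
Definition strong_hypercube_decomposition (u v z : perm_n)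
  (theta : perm_n -> {set perm_n} -> perm_n) : Prop :=
  [/\ z \in binterval u v,
      diamond_closed u v (binterval u z)
    & forall x, x \in binterval u z ->
        strong_cluster u v (binterval u z) x (theta x)].

Definition reflection_order (ord : rel refl) : Prop :=
  [/\ forall t, is_refl t -> ~~ ord t t,
      forall t1 t2 t3, is_refl t1 -> is_refl t2 -> is_refl t3 ->
        ord t1 t2 -> ord t2 t3 -> ord t1 t3,
      forall t1 t2, is_refl t1 -> is_refl t2 -> t1 != t2 ->
        ord t1 t2 || ord t2 t1
    & forall a b c : 'I_n, a < b -> b < c ->
        (ord (a, b) (a, c) && ord (a, c) (b, c)) ||
        (ord (b, c) (a, c) && ord (a, c) (a, b))].

Definition E1 (ord : rel refl) (u v : perm_n) (I : {set perm_n}) : Prop :=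
  forall x t1 y1 t2 y2, x \in I -> bedge x t1 y1 -> bedge x t2 y2 ->
    y1 \in I -> y2 \in binterval u v :\: I -> ord t1 t2.

(* a path from w: list of steps (label, next vertex) *)
Fixpoint bpath (w : perm_n) (s : seq (refl * perm_n)) : bool :=
  if s is (t, x) :: s' then bedge w t x && bpath x s' else true.

Definition increasing_path (ord : rel refl) (u v : perm_n)
  (s : seq (refl * perm_n)) : bool :=
  [&& bpath u s, sorted ord (map fst s) & last u (map snd s) == v].

End Bruhat.

(* Main.v *)
Require Import Defs.
From mathcomp Require Import all_boot all_order all_fingroup.
Set Implicit Arguments. Unset Strict Implicit. Unset Printing Implicit Defensive.
From mathcomp Require Import zify.

Section Len.
Variable n : nat.
Local Notation perm_n := {perm 'I_n}.

Lemma len_up (w : perm_n) (P Q : 'I_n) : P < Q -> w P < w Q ->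
  inv_len w < inv_len (tperm P Q * w)%g.
Proof.
move=> PQ wPQ.
set s := tperm P Q.
pose inI (i : 'I_n) := (P < i) && (i < Q).
pose phi (p : 'I_n * 'I_n) := if inI p.1 || inI p.2 then p else (s p.1, s p.2).
have inIs i : inI (s i) = inI i.
  rewrite /s /inI; case: (tpermP P Q i) => [->|->|//]; lia.
have phiK : involutive phi.
  move=> p; rewrite /phi; case H: (inI p.1 || inI p.2); first by rewrite H.
  rewrite /= !inIs H.
  by rewrite !tpermK; case: p {H}.
have phiI : injective phi by apply: inv_inj.
rewrite /inv_len -(card_imset _ phiI).
apply: proper_card; apply/properP; split.
{   apply/subsetP => q /imsetP[[p1 p2]]; rewrite inE => /andP[/= p12 wp] ->{q}.
  rewrite inE !permM /phi.
  case: ifP => H; rewrite /= -/s.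
    move: H; rewrite /inI /= => H; apply/andP; split => //.
    case: (tpermP P Q p1) => [e1|e1|n1 n2]; case: (tpermP P Q p2) => [e2|e2|m1 m2];
     rewrite ?e1 ?e2 in H p12 wp *; try lia.
    all: try by [ exact: wp | exact: ltn_trans wp wPQ | exact: ltn_trans wPQ wp ].
  rewrite !tpermK wp andbT; move/negbT: H; rewrite /inI /= => H.
  case: (tpermP P Q p1) => [e1|e1|n1 n2]; case: (tpermP P Q p2) => [e2|e2|m1 m2];
     rewrite ?e1 ?e2 in H p12 wp *; try lia.
  all: try (have : nat_of_ord p2 <> nat_of_ord P by move=> E; apply: m1; apply: val_inj).
  all: try (have : nat_of_ord p2 <> nat_of_ord Q by move=> E; apply: m2; apply: val_inj).
  all: try (have : nat_of_ord p1 <> nat_of_ord P by move=> E; apply: n1; apply: val_inj).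
  all: try (have : nat_of_ord p1 <> nat_of_ord Q by move=> E; apply: n2; apply: val_inj).
  all: lia. }
exists (P, Q).
  by rewrite inE /= PQ !permM /s tpermL tpermR.
apply/imsetP => -[p]; rewrite inE => /andP[p12 wp] E.
have : p = phi (P, Q) by rewrite E phiK.
rewrite /phi /inI /= !ltnn andbF /= /s tpermL tpermR => Ep.
by rewrite Ep /= in p12; lia.
Qed.

Lemma tmulE (a b : 'I_n) (w : perm_n) :
  tmul (a, b) w = (tperm (w^-1%g a) (w^-1%g b) * w)%g.
Proof.
rewrite /tmul /=.
have := tpermJ (w^-1%g a) (w^-1%g b) w; rewrite !permKV => <-.
by rewrite conjgE mulKVg.
Qed.

Lemma ord_neq (a b : 'I_n) : (a : nat) <> b -> a != b.
Proof. by move=> H; apply/eqP => E; apply: H; rewrite E. Qed.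

Lemma tmul_pos (t : 'I_n * 'I_n) (w : perm_n) x :
  (tmul t w)^-1%g x = w^-1%g (tperm t.1 t.2 x).
Proof. by rewrite /tmul invMg tpermV permM. Qed.

Lemma edge_up (w : perm_n) (a b : 'I_n) : a < b ->
  (inv_len w < inv_len (tmul (a, b) w)) = (w^-1%g a < w^-1%g b).
Proof.
move=> ab; rewrite tmulE.
case: (ltngtP (w^-1%g a) (w^-1%g b)) => H.
- by apply: len_up; rewrite // !permKV.
- apply/negbTE; rewrite -leqNgt; apply: ltnW.
  set w' := (tperm (w^-1%g a) (w^-1%g b) * w)%g.
  have -> : w = (tperm (w^-1%g b) (w^-1%g a) * w')%g.
    by rewrite /w' tpermC mulgA tperm2 mul1g.
  apply: len_up => //.
  by rewrite /w' !permM tpermL tpermR !permKV.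
- have E : w^-1%g a = w^-1%g b by apply: val_inj.
  by move/perm_inj: E => E; rewrite E ltnn in ab.
Qed.

Lemma bedgeE (w x : perm_n) (a b : 'I_n) :
  bedge w (a, b) x = [&& a < b, x == tmul (a, b) w & w^-1%g a < w^-1%g b].
Proof.
rewrite /bedge /is_refl /=.
case ab: (a < b) => //=.
case: eqP => //= ->.
by rewrite edge_up.
Qed.

Lemma tperm_inj2 (x y x' y' : 'I_n) : x < y -> x' < y' ->
  tperm x y = tperm x' y' -> (x, y) = (x', y').
Proof.
move=> xy xy' E.
have Ex := congr1 (fun f : perm_n => f x) E.
have Ey := congr1 (fun f : perm_n => f y) E.
rewrite /= tpermL in Ex; rewrite /= tpermR in Ey.
move: Ex Ey.
case: (tpermP x' y' x) => [e1|e1|n1 n2]; case: (tpermP x' y' y) => [e2|e2|m1 m2];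
  move=> Ex Ey; subst => //.
- by move: xy xy'; lia.
- by rewrite ltnn in xy.
Qed.

Ltac neq_tac := first [ done | by rewrite eq_sym | by apply: ord_neq; lia ].
Ltac tpd H0 := repeat (rewrite ?tpermL ?tpermR in H0 *; match goal with
 | |- context [?f ?z] => match f with context [tperm ?x ?y] =>
     rewrite (@tpermD _ x y z); [|neq_tac|neq_tac] end
 | H : context [?f ?z] |- _ => match f with context [tperm ?x ?y] =>
     rewrite (@tpermD _ x y z) in H; [|neq_tac|neq_tac] end
end); rewrite ?tpermL ?tpermR in H0 *.

Lemma core (ord : rel ('I_n * 'I_n)) (RO : reflection_order ord)
  (P : perm_n) (a1 b1 a2 b2 : 'I_n) :
  a1 < b1 -> a2 < b2 -> P a1 < P b1 -> P (tperm a1 b1 a2) < P (tperm a1 b1 b2) ->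
  ord (a1, b1) (a2, b2) ->
  (tperm a2 b2 a1 < tperm a2 b2 b1 /\ P a2 < P b2) \/
  [/\ tperm a1 b1 a2 < tperm a1 b1 b2,
      P (tperm (tperm a1 b1 a2) (tperm a1 b1 b2) a1)
        < P (tperm (tperm a1 b1 a2) (tperm a1 b1 b2) b1)
    & ord (a1, b1) (tperm a1 b1 a2, tperm a1 b1 b2)].
Proof.
case: RO => irr tr tot three ab1 ab2 p1 p2 o12.
have ir (x y : 'I_n) : x < y -> ord (x, y) (x, y) = false.
  by move=> xy; apply/negbTE; apply: irr.
have tr' (x1 y1 x2 y2 x3 y3 : 'I_n) : x1 < y1 -> x2 < y2 -> x3 < y3 ->
   ord (x1, y1) (x2, y2) -> ord (x2, y2) (x3, y3) -> ord (x1, y1) (x3, y3).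
  by move=> *; apply: (tr _ (x2, y2)).
case: (eqVneq a2 a1) => [e21|n21].
  subst a2.
  case: (ltngtP b1 b2) => h.
  - right; tpd p2; split => //; first by lia.
    have := three a1 b1 b2 ab1 h; rewrite o12 /=.
    case/orP => [o|/andP[o1 o2]]; first by apply: (tr' _ _ a1 b2) => //; lia.
    by move: (tr' _ _ _ _ _ _ ab1 ab2 ab1 o12 o2); rewrite ir.
  - left; tpd p2; split => //; lia.
  - have E : b1 = b2 by apply: val_inj.
    by subst b2; rewrite ir in o12.
case: (eqVneq b2 b1) => [e21|n22].
  subst b2.
  case: (ltngtP a1 a2) => h.
  - left; tpd p2; split => //; lia.
  - right; tpd p2; split => //; first by lia.
    have := three a2 a1 b1 h ab1.
    case/orP => [/andP[o1 o2]|/andP[o1 o2]].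
      by move: (tr' _ _ _ _ _ _ ab1 ab2 ab1 o12 o2); rewrite ir.
    by apply: (tr' _ _ a2 b1) => //; lia.
  - have E : a1 = a2 by apply: val_inj.
    by subst a2; rewrite ir in o12.
case: (eqVneq a2 b1) => [e|n3].
  subst a2.
  have ab21 : a1 < b2 by lia.
  have := three a1 b1 b2 ab1 ab2.
  case/orP => [/andP[o1 o2]|/andP[o1 o2]]; last first.
    have o3 := tr' _ _ _ _ _ _ ab2 ab21 ab1 o1 o2.
    by move: (tr' _ _ _ _ _ _ ab1 ab2 ab1 o12 o3); rewrite ir.
  case: (ltngtP (P b1) (P b2)) => h.
  - left; tpd p2; split => //; lia.
  - right; tpd p2; split => //; lia.
  - have E : b1 = b2 by apply: (@perm_inj _ P); apply: val_inj.
    by subst b2; rewrite ltnn in ab2.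
case: (eqVneq b2 a1) => [e|n4].
  subst b2.
  have ab21 : a2 < b1 by lia.
  have := three a2 a1 b1 ab2 ab1.
  case/orP => [/andP[o1 o2]|/andP[o1 o2]].
    have o3 := tr' _ _ _ _ _ _ ab2 ab21 ab1 o1 o2.
    by move: (tr' _ _ _ _ _ _ ab1 ab2 ab1 o12 o3); rewrite ir.
  case: (ltngtP (P a1) (P a2)) => h.
  - right; tpd p2; split => //; lia.
  - left; tpd p2; split => //; lia.
  - have E : a1 = a2 by apply: (@perm_inj _ P); apply: val_inj.
    by subst a2; rewrite ltnn in ab2.
left; tpd p2; split => //.
Qed.

Lemma tmul_inj (w : perm_n) (x y x' y' : 'I_n) : x < y -> x' < y' ->
  tmul (x, y) w = tmul (x', y') w -> (x, y) = (x', y').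
Proof.
by move=> xy xy' E; apply: tperm_inj2 => //; apply: (mulgI w); move: E; rewrite /tmul.
Qed.

Lemma swap (ord : rel ('I_n * 'I_n)) (RO : reflection_order ord)
  (w wm c : perm_n) t1 t2 :
  bedge w t1 wm -> bedge wm t2 c -> ord t1 t2 ->
  exists t' a t'', [/\ bedge w t' a, bedge a t'' c, a != wm & ord t1 t'].
Proof.
case: t1 => a1 b1; case: t2 => a2 b2.
rewrite !bedgeE => /and3P[ab1 /eqP-> p1] /and3P[ab2 /eqP-> p2] o12.
rewrite !tmul_pos /= in p2.
have irr : forall x y : 'I_n, x < y -> ord (x, y) (x, y) = false.
  by case: RO => irr _ _ _ x y xy; apply/negbTE; apply: irr.
have := core RO ab1 ab2 p1 p2 o12.
case => [[h1 h2]|[h1 h2 h3]].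
- exists (a2, b2), (tmul (a2, b2) w), (tperm a2 b2 a1, tperm a2 b2 b1); split => //.
  + by rewrite bedgeE ab2 eqxx h2.
  + rewrite bedgeE h1 /= !tmul_pos /= !tpermK p1 andbT.
    apply/eqP; rewrite /tmul /= -(tpermJ a1 b1 (tperm a2 b2)) conjgE.
    by rewrite -!mulgA mulKVg.
  + apply/eqP => /tmul_inj E.
    by move: (E ab2 ab1) => E'; case: E' => e1 e2; subst; rewrite irr in o12.
- exists (tperm a1 b1 a2, tperm a1 b1 b2), (tmul (tperm a1 b1 a2, tperm a1 b1 b2) w), (a1, b1); split => //.
  + by rewrite bedgeE h1 eqxx.
  + rewrite bedgeE ab1 /= !tmul_pos /= h2 andbT.
    apply/eqP; rewrite /tmul /= -(tpermJ a2 b2 (tperm a1 b1)) conjgE tpermV.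
    by rewrite !mulgA -(mulgA _ (tperm a1 b1) (tperm a1 b1)) tperm2 mulg1.
  + apply/eqP => /tmul_inj E.
    by move: (E h1 ab1) => E'; rewrite E' irr in h3.
Qed.

Definition thetas (th : {set perm_n} -> perm_n) (ys : seq perm_n) :=
  [seq th [set y in take i ys] | i <- iota 1 (size ys)].

Lemma thetas_rcons th ys y :
  thetas th (rcons ys y) = rcons (thetas th ys) (th [set y0 in rcons ys y]).
Proof.
rewrite /thetas size_rcons -[(size ys).+1]addn1.
rewrite iotaD map_cat /= cats1.
congr rcons; last first.
  by rewrite add1n -(size_rcons ys y) take_size.
apply/eq_in_map => i; rewrite mem_iota => /andP[_ hi].
by rewrite -cats1 takel_cat //; move: hi; rewrite add1n ltnS.
Qed.

Lemma thetas_last th x ys : th set0 = x ->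
  last x (thetas th ys) = th [set y in ys].
Proof.
move=> h0; case/lastP: ys => [|ys y].
  by rewrite /thetas /= -h0; congr th; apply/setP => y; rewrite !inE.
by rewrite thetas_rcons last_rcons.
Qed.

Lemma bpath_rcons (w : perm_n) (s : seq (('I_n * 'I_n) * perm_n)) p :
  bpath w (rcons s p) = bpath w s && bedge (last w (map snd s)) p.1 p.2.
Proof.
elim: s w => [|[t y] s IH] w /=; first by case: p => t y /=; rewrite andbT.
by rewrite IH andbA.
Qed.

Lemma sorted_rcons (T : Type) (e : rel T) l a :
  sorted e (rcons l a) = sorted e l && (if l is h :: l' then e (last h l') a else true).
Proof. by case: l => [|h l] //=; rewrite rcons_path. Qed.

Lemma bpath_refl (w : perm_n) (s : seq (('I_n * 'I_n) * perm_n)) : bpath w s -> all (@is_refl n) (map fst s).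
Proof.
elim: s w => [|[t y] s IH] w //= /andP[/and3P[r _ _] H].
by rewrite r (IH y).
Qed.

Lemma bedge_len (w : perm_n) t x : bedge w t x -> inv_len w < inv_len x.
Proof. by case/and3P. Qed.

Lemma bedge_le (w : perm_n) t x : bedge w t x -> bruhat_le w x.
Proof. by move=> h; apply: connect1; apply/existsP; exists t. Qed.

Lemma path_reach (w : perm_n) (s : seq (('I_n * 'I_n) * perm_n)) : bpath w s ->
  all (fun p => bruhat_le w p && bruhat_le p (last w (map snd s))) (map snd s).
Proof.
elim: s w => [|[t y] s IH] w //= /andP[e H].
have wy := bedge_le e.
have := IH y H; set L := last y (map snd s) => Hall.
have yL : bruhat_le y L.
  have := mem_last y (map snd s); rewrite -/L inE => /orP[/eqP ->|hL].
    by rewrite /bruhat_le connect0.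
  by case/andP: (allP Hall L hL).
rewrite wy yL /=.
apply/allP => p hp; have /andP[a b] := allP Hall p hp.
by rewrite b andbT; apply: connect_trans wy a.
Qed.
End Len.

Section Main.
Variable n : nat.
Local Notation perm_n := {perm 'I_n}.
Variables (u v z : perm_n) (theta : perm_n -> {set perm_n} -> perm_n)
  (ord : rel ('I_n * 'I_n)).
Hypothesis Hdec : strong_hypercube_decomposition u v z theta.
Hypothesis RO : reflection_order ord.
Hypothesis HE1 : E1 ord u v (binterval u z).

Local Notation I := (binterval u z).
Definition Dm (y : perm_n) := (y \in binterval u v) && (y \notin I).

Lemma I_uv w : w \in I -> w \in binterval u v.
Proof.
case: Hdec => zuv _ _; move: zuv; rewrite !inE => /andP[_ zv] /andP[uw wz].
by rewrite uw; apply: connect_trans wz zv.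
Qed.

Lemma ideal w a : w \in binterval u v -> w \notin I -> bruhat_le w a -> a \notin I.
Proof.
rewrite !inE => /andP[uw _] wI wa; apply/negP => /andP[_ az].
by move: wI; rewrite uw /= /bruhat_le (connect_trans wa az).
Qed.

Definition rep x ys (ws : seq perm_n) :=
  [/\ uniq ys, in_Acal u v I x [set y in ys] & ws = thetas (theta x) ys].

Lemma in_Acal_sub x (Y Y' : {set perm_n}) : Y \subset Y' -> in_Acal u v I x Y' -> in_Acal u v I x Y.
Proof.
move=> sub /andP[s1 a1]; apply/andP; split; first exact: subset_trans sub s1.
apply/forallP => y; apply/implyP => yY; apply/forallP => y'; apply/implyP => y'Y.
move/forallP: a1 => /(_ y) /implyP /(_ (subsetP sub _ yY)) /forallP /(_ y') /implyP.
by apply; apply: (subsetP sub).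
Qed.

Lemma ordT t1 t2 t3 : is_refl t1 -> is_refl t2 -> is_refl t3 ->
  ord t1 t2 -> ord t2 t3 -> ord t1 t3.
Proof. by case: RO => _ tr _ _; apply: tr. Qed.

Lemma ord_asym t1 t2 : is_refl t1 -> is_refl t2 -> ord t1 t2 -> ord t2 t1 -> False.
Proof.
case: RO => irr _ _ _ r1 r2 o1 o2.
by move: (irr t1 r1); rewrite (ordT r1 r2 r1 o1 o2).
Qed.

Lemma set_rcons (ys : seq perm_n) y :
  [set y0 in rcons ys y] = y |: [set y0 in ys].
Proof. by apply/setP => a; rewrite !inE mem_rcons inE. Qed.

Lemma card_set_uniq (ys : seq perm_n) : uniq ys -> #|[set y in ys]| = size ys.
Proof. by move=> U; rewrite cardsE; apply/card_uniqP. Qed.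

Lemma sorted_rcons2 (T : Type) (e : rel T) l a b :
  sorted e (rcons (rcons l a) b) = sorted e (rcons l a) && e a b.
Proof.
case: l => [|h l] /=; first by rewrite andbT.
by rewrite !rcons_path last_rcons.
Qed.

Lemma sorted_rcons_sub (T : eqType) (e : rel T) l a a' :
  sorted e (rcons l a) -> (forall c, c \in l -> e c a -> e c a') ->
  sorted e (rcons l a').
Proof.
case: l => [|h l] //= ; rewrite !rcons_path => /andP[-> H] Hc /=.
by apply: Hc => //; apply: mem_last.
Qed.

Lemma rcons_eq2 (T : eqType) (s1 s2 : seq T) x1 x2 :
  rcons s1 x1 = rcons s2 x2 -> s1 = s2 /\ x1 = x2.
Proof. by move/eqP; rewrite eqseq_rcons => /andP[/eqP -> /eqP ->]. Qed.

Lemma bedge0E (w x : perm_n) t : bedge w t x -> bedge0 w x.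
Proof. by move=> h; apply/existsP; exists t. Qed.

Lemma Qstep x (xI : x \in I) (Hc : strong_cluster u v I x (theta x))
  (s0 : seq (('I_n * 'I_n) * perm_n)) :
  forall t1 b ys0,
  bpath x (rcons s0 (t1, b)) -> sorted ord (map fst (rcons s0 (t1, b))) ->
  all Dm (map snd (rcons s0 (t1, b))) -> rep x ys0 (map snd s0) ->
  exists y, rep x (rcons ys0 y) (map snd (rcons s0 (t1, b))).
Proof.
case: Hc => Hin H0 H1 H3 H4.
elim/last_ind: s0 => [|s1 [tp wv] IH] t1 b ys0 Hp Hs Hd [U A Eq].
  case: ys0 U A Eq => [|y ys] //= _ _ _.
  move: Hp Hd => /= /andP[e _] /andP[bD _].
  have bY : b \in Ycal u v I x.
    by move: bD; rewrite /Dm /Ycal !inE => /andP[-> ->]; rewrite (bedge0E e).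
  have Sb : [set y in [:: b]] = [set b] by apply/setP => y; rewrite !inE.
  exists b; split => //.
    rewrite Sb; apply/andP; split; first by rewrite sub1set.
    by apply/forallP => y; apply/implyP; rewrite inE => /eqP ->;
       apply/forallP => y'; apply/implyP; rewrite inE => /eqP ->; rewrite eqxx.
  by rewrite /thetas /= Sb H1.
set w' := last x (map snd s1).
move: Hp; rewrite !bpath_rcons /= map_rcons last_rcons -/w' => /andP[/andP[Hp1 e1] e2].
have Hr := bpath_refl (Hp1 : bpath x s1).
have rtp : is_refl tp by case/and3P: e1.
have rt1 : is_refl t1 by case/and3P: e2.
move: Hs; rewrite !map_rcons sorted_rcons2 => /andP[Hs1 o].
move: Hd; rewrite !map_rcons !all_rcons /= => /and3P[bD wvD Hd1].
rewrite map_rcons in Eq.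
case/lastP: ys0 U A Eq => [|ys1 yl] U A Eq.
  by move/(congr1 size): Eq; rewrite size_rcons.
rewrite thetas_rcons /= in Eq; case/rcons_eq2: Eq => Eq1 Eq2.
have w'uv : w' \in binterval u v.
  have := mem_last x (map snd s1); rewrite -/w' inE => /orP[/eqP ->|h].
    exact: I_uv.
  by case/andP: (allP Hd1 _ h).
have [t' [a [t'' [ea eb ne ot]]]] := swap RO e1 e2 o.
have rt' : is_refl t' by case/and3P: ea.
have aD : Dm a.
  apply/andP; split.
    move: w'uv; rewrite !inE => /andP[uw' _]; rewrite /bruhat_le (connect_trans uw' (bedge_le ea)) /=.
    by case/andP: bD; rewrite inE => /andP[_ bv] _; apply: connect_trans (bedge_le eb) bv.
  case: (boolP (w' \in I)) => w'I.
    apply/negP => aI; apply: (ord_asym rtp rt' ot).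
    by apply: (HE1 w'I ea e1 aI); rewrite in_setD; case/andP: wvD => -> ->.
  exact: ideal w'uv w'I (bedge_le ea).
have [y' [U' A' Eq']] : exists y', rep x (rcons ys1 y') (map snd (rcons s1 (t', a))).
  apply: IH.
  - by rewrite bpath_rcons Hp1 /= -/w' ea.
  - rewrite map_rcons; apply: sorted_rcons_sub Hs1 _ => c hc oc.
    by apply: (ordT _ rtp rt' oc ot); apply: (allP Hr).
  - by rewrite map_rcons all_rcons aD Hd1.
  - split => //; first by move: U; rewrite rcons_uniq => /andP[].
    by apply: in_Acal_sub A; rewrite set_rcons subsetUr.
rewrite map_rcons thetas_rcons /= in Eq'; case/rcons_eq2: Eq' => _ Eqa.
set Y := [set y0 in rcons ys1 yl] in A Eq2.
set Y' := [set y0 in rcons ys1 y'] in A' Eqa.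
have U1 : uniq ys1 by move: U; rewrite rcons_uniq => /andP[].
have yl'ne : yl != y'.
  apply/eqP => e; move: ne; rewrite Eqa Eq2 /Y /Y' e eqxx //.
have YY' : Y :&: Y' = [set y in ys1].
  apply/setP => y; rewrite /Y /Y' !set_rcons !inE.
  case: (boolP (y \in ys1)) => /=; rewrite ?orbT ?orbF //.
  by move=> _; case: (eqVneq y yl) => // ->; rewrite (negbTE yl'ne).
have thw' : theta x (Y :&: Y') = w'.
  by rewrite YY' /w' Eq1 thetas_last.
have cY : #|Y| = (size ys1).+1 by rewrite card_set_uniq // size_rcons.
have cY' : #|Y'| = (size ys1).+1 by rewrite card_set_uniq // size_rcons.
have cI : #|Y :&: Y'| = size ys1 by rewrite YY' card_set_uniq.
have lw'wv := bedge_len e1; have lwvb := bedge_len e2.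
have lw'a := bedge_len ea; have lab := bedge_len eb.
have neq (p q : perm_n) : inv_len p < inv_len q -> p != q.
  by move=> h; apply/eqP => epq; rewrite epq ltnn in h.
have dia : diamond_in u v (theta x (Y :&: Y')) (theta x Y) (theta x Y') b.
  rewrite thw' -Eq2 -Eqa /diamond_in /diamond.
  apply/andP; split.
    rewrite (bedge0E e1) (bedge0E e2) (bedge0E ea) (bedge0E eb) !andbT.
    rewrite /= !inE !negb_or (neq _ _ lw'wv) (neq _ _ lw'a) (neq _ _ (ltn_trans lw'wv lwvb)).
    rewrite eq_sym ne (neq _ _ lwvb) (neq _ _ lab) //.
  rewrite /= w'uv andbT.
  by move: bD wvD aD; rewrite /Dm => /andP[-> _] /andP[-> _] /andP[-> _].
have [anti thb] := H4 Y Y' b A A' (etrans cY (esym cY')) (etrans cY (congr1 S (esym cI))) dia.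
have YU : [set y0 in rcons (rcons ys1 yl) y'] = Y :|: Y'.
  apply/setP => y; rewrite /Y /Y' !set_rcons !inE.
  by case: (y == y'); case: (y == yl); case: (y \in ys1); rewrite ?orbT.
exists y'; split.
- rewrite rcons_uniq U andbT mem_rcons inE negb_or eq_sym yl'ne /=.
  by move: U'; rewrite rcons_uniq => /andP[].
- rewrite YU; apply/andP; split => //.
  by rewrite subUset; case/andP: A => -> _; case/andP: A' => -> _.
- by rewrite thetas_rcons YU thb thetas_rcons -Eq1 -Eq2.
Qed.

Lemma in_Acal0 x : in_Acal u v I x [set y in [::]].
Proof.
apply/andP; split; first by apply/subsetP => y; rewrite inE.
by apply/forallP => y; rewrite inE.
Qed.

Lemma Crep x (xI : x \in I) (Hc : strong_cluster u v I x (theta x))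
  (s : seq (('I_n * 'I_n) * perm_n)) :
  bpath x s -> sorted ord (map fst s) -> all Dm (map snd s) ->
  exists ys, rep x ys (map snd s).
Proof.
elim/last_ind: s => [|s0 [t b] IH] Hp Hs Hd.
  by exists [::]; split => //; exact: in_Acal0.
have [ys0 R] : exists ys0, rep x ys0 (map snd s0).
  apply: IH.
  - by move: Hp; rewrite bpath_rcons => /andP[].
  - by move: Hs; rewrite map_rcons sorted_rcons => /andP[].
  - by move: Hd; rewrite map_rcons all_rcons => /andP[].
have [y Ry] := Qstep xI Hc Hp Hs Hd R.
by exists (rcons ys0 y).
Qed.

Lemma Gmain (s : seq (('I_n * 'I_n) * perm_n)) :
  forall w, w \in I -> bpath w s -> sorted ord (map fst s) ->
  last w (map snd s) = v ->
  exists x, x \in I /\ exists ys : seq perm_n,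
    [/\ uniq ys, in_Acal u v I x [set y in ys] &
        suffix (x :: thetas (theta x) ys) (w :: map snd s)].
Proof.
elim: s => [|[t y] s IH] w wI Hp Hs Hl.
  exists w; split => //; exists [::]; split => //; first exact: in_Acal0.
  by rewrite /thetas /= suffix_refl.
move: (Hp) => /= /andP[e Hp'].
case: (boolP (y \in I)) => yI.
  have [x [xI [ys [U A S]]]] := IH y yI Hp' (path_sorted Hs) Hl.
  exists x; split => //; exists ys; split => //.
  by apply: suffix_trans S _; exact: suffix_cons.
exists w; split => //.
have Hc : strong_cluster u v I w (theta w) by case: Hdec => _ _ Hcl; apply: Hcl.
have uw : bruhat_le u w by move: (I_uv wI); rewrite inE => /andP[].
have HR := path_reach Hp; rewrite Hl in HR.
have HD : all Dm (map snd ((t, y) :: s)).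
  apply/allP => p hp; have /andP[wp pv] := allP HR p hp.
  have puv : p \in binterval u v by rewrite inE pv /bruhat_le (connect_trans uw wp).
  rewrite /Dm puv /=.
  move: hp; rewrite /= inE => /orP[/eqP -> //|h].
  have yuv : y \in binterval u v.
    by have /andP[wy yv] := allP HR y (mem_head _ _); rewrite inE yv /bruhat_le (connect_trans uw wy).
  have /andP[yp _] := allP (path_reach Hp') p h.
  exact: ideal yuv yI yp.
have [ys [U A Eq]] := Crep wI Hc Hp Hs HD.
exists ys; split => //.
by rewrite /= -Eq suffix_refl.
Qed.
End Main.


Theorem lemma3p14 (n : nat) (u v z : {perm 'I_n})
  (theta : {perm 'I_n} -> {set {perm 'I_n}} -> {perm 'I_n})
  (ord : rel ('I_n * 'I_n))
  (s : seq (('I_n * 'I_n) * {perm 'I_n})) :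
  bruhat_le u v ->
  strong_hypercube_decomposition u v z theta ->
  reflection_order ord ->
  E1 ord u v (binterval u z) ->
  increasing_path ord u v s ->
  exists x, x \in binterval u z /\
    exists ys : seq {perm 'I_n},
      [/\ uniq ys, in_Acal u v (binterval u z) x [set y in ys] &
          suffix (x :: [seq theta x [set y in take i ys] | i <- iota 1 (size ys)])
                 (u :: map snd s)].
Proof.
move=> _ Hd RO HE /and3P[Hp Hs /eqP Hl].
have uI : u \in binterval u z.
  case: Hd => zuv _ _; move: zuv; rewrite !inE => /andP[uz _].
  by rewrite uz /bruhat_le connect0.
exact: (Gmain Hd RO HE uI Hp Hs Hl).
Qed.
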